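(* Let $W$ be a channel from $\{1,\dots,m\}$ to $\{1,\dots,n\}$. Let \[ \mathfrak{U}_+=\Big\{\mathrm{supp}((\alpha)_+):\alpha\in\mathbb{R}^{\mathcal{D}},\ \sum_D\alpha_DD=0,\ \sum_D\alpha_D\log_2\mathrm{rank}(D)>0\Big\}, \] \[ \mathfrak{U}_-=\Big\{\mathrm{supp}((\alpha)_-):\alpha\in\mathbb{R}^{\mathcal{D}},\ \sum_D\alpha_DD=0,\ \sum_D\alpha_D\log_2\mathrm{rank}(D)>0\Big\}. \] For $\lambda\in\Lambda(W)$: $C_{11}(\lambda)=\underline{C}_{11}(W)$ if and only if there is no $U\in\mathfrak{U}_+$ with $U\subseteq\mathrm{supp}(\lambda)$; and $C_{11}(\lambda)=\overline{C}_{11}(W)$ if and only if there is no $U\in\mathfrak{U}_-$ with $U\subseteq\mathrm{supp}(\lambda)$.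
   Context: A channel is a row-stochastic matrix; a deterministic channel from $\{1,\dots,m\}$ to $\{1,\dots,n\}$ is one with 0-1 entries; $\mathcal{D}$ is the set of them, $\mathrm{rank}(D)$ the matrix rank. $\Lambda(W)=\{\lambda\text{ probability distribution on }\mathcal{D}: W=\sum_D\lambda_DD\}$. $C_{11}(\lambda)=\sum_D\lambda_D\log_2\mathrm{rank}(D)$, $\underline{C}_{11}(W)=\inf_{\lambda\in\Lambda(W)}C_{11}(\lambda)$, $\overline{C}_{11}(W)=\sup_{\lambda\in\Lambda(W)}C_{11}(\lambda)$. For $\alpha\in\mathbb{R}^{\mathcal{D}}$, $(\alpha)_+=(\max(\alpha_D,0))_D$, $(\alpha)_-=(\min(\alpha_D,0))_D$, and $\mathrm{supp}(\alpha)=\{D:\alpha_D\neq0\}$. *)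

(* Defs.v *)
From HB Require Import structures.
From mathcomp Require Import all_boot all_order all_algebra.
From mathcomp Require Import all_classical all_reals exp.
Set Implicit Arguments. Unset Strict Implicit. Unset Printing Implicit Defensive.
Import Order.TTheory GRing.Theory Num.Theory.
Local Open Scope ring_scope.
Local Open Scope classical_set_scope.

Section Defs.
Variables (R : realType) (m n : nat).

(* deterministic channels {1..m} -> {1..n} are indexed by functions 'I_m -> 'I_n;
   detmx f is the 0-1 row-stochastic matrix with a 1 at (i, f i). *)
Definition detmx (f : {ffun 'I_m -> 'I_n}) : 'M[R]_(m, n) :=
  \matrix_(i, j) (f i == j)%:R.

Definition log2 (x : R) : R := ln x / ln 2.

Definition is_channel (W : 'M[R]_(m, n)) : Prop :=
  (forall i j, 0 <= W i j) /\ (forall i, \sum_j W i j = 1).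

Definition is_distribution (lam : {ffun {ffun 'I_m -> 'I_n} -> R}) : Prop :=
  (forall D, 0 <= lam D) /\ \sum_D lam D = 1.

Definition in_Lambda (W : 'M[R]_(m, n)) (lam : {ffun {ffun 'I_m -> 'I_n} -> R}) : Prop :=
  is_distribution lam /\ W = \sum_D lam D *: detmx D.

Definition C11 (lam : {ffun {ffun 'I_m -> 'I_n} -> R}) : R :=
  \sum_D lam D * log2 (\rank (detmx D))%:R.

Definition C11_values (W : 'M[R]_(m, n)) : set R :=
  [set x | exists lam, in_Lambda W lam /\ x = C11 lam].

Definition C11_lower (W : 'M[R]_(m, n)) : R := inf (C11_values W).
Definition C11_upper (W : 'M[R]_(m, n)) : R := sup (C11_values W).

Definition pos_part (a : {ffun {ffun 'I_m -> 'I_n} -> R}) : {ffun {ffun 'I_m -> 'I_n} -> R} :=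
  [ffun D => Num.max (a D) 0].
Definition neg_part (a : {ffun {ffun 'I_m -> 'I_n} -> R}) : {ffun {ffun 'I_m -> 'I_n} -> R} :=
  [ffun D => Num.min (a D) 0].

Definition supp (a : {ffun {ffun 'I_m -> 'I_n} -> R}) : {set {ffun 'I_m -> 'I_n}} :=
  [set D | a D != 0].

Definition admissible (alpha : {ffun {ffun 'I_m -> 'I_n} -> R}) : Prop :=
  \sum_D alpha D *: detmx D = 0 /\ 0 < \sum_D alpha D * log2 (\rank (detmx D))%:R.

Definition U_plus (U : {set {ffun 'I_m -> 'I_n}}) : Prop :=
  exists alpha, admissible alpha /\ U = supp (pos_part alpha).
Definition U_minus (U : {set {ffun 'I_m -> 'I_n}}) : Prop :=
  exists alpha, admissible alpha /\ U = supp (neg_part alpha).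

End Defs.

(* Main.v *)
Require Import Defs.
From HB Require Import structures.
From mathcomp Require Import all_boot all_order all_algebra.
From mathcomp Require Import all_classical all_reals exp.
From mathcomp Require Import ring lra.
Import Order.TTheory GRing.Theory Num.Theory.
Local Open Scope ring_scope.

Section Aux.
Variables (R : realType) (m n : nat).
Local Notation DT := {ffun 'I_m -> 'I_n}.
Local Notation FT := {ffun DT -> R}.

Lemma log2_ge0 (k : nat) : 0 <= log2 (k%:R : R).
Proof.
rewrite /log2; apply: divr_ge0; last by apply: ln_ge0; rewrite ler1n.
case: k => [|k]; first by rewrite ln0.
by apply: ln_ge0; rewrite ler1n.
Qed.

Lemma dist_le1 (lam : FT) D : is_distribution lam -> lam D <= 1.
Proof.
move=> [h0 h1]; rewrite -h1 (bigD1 D) //= lerDl.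
by apply: sumr_ge0 => i _; apply: h0.
Qed.

Lemma C11_ge0 (lam : FT) : is_distribution lam -> 0 <= C11 lam.
Proof.
move=> [h0 _]; apply: sumr_ge0 => D _; apply: mulr_ge0 => //; exact: log2_ge0.
Qed.

Lemma C11_leB (lam : FT) : is_distribution lam ->
  C11 lam <= \sum_(D : DT) log2 (\rank (detmx R D))%:R.
Proof.
move=> hd; apply: ler_sum => D _; apply: ler_piMl; first exact: log2_ge0.
exact: dist_le1.
Qed.

Lemma sum_alpha0 (a : FT) : admissible a -> \sum_D a D = 0.
Proof.
case: m a => [|k] a [h1 h2].
  exfalso; move: h2; rewrite big1 ?ltxx // => D _.
  have -> : \rank (detmx R D) = 0%N.
    by apply/eqP; rewrite -leqn0; apply: rank_leq_row.
  by rewrite /log2 ln0 // mul0r mulr0.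
have := congr1 (fun M : 'M[R]_(k.+1, n) => \sum_j M ord0 j) h1.
have z0 : \sum_j (0 : 'M[R]_(k.+1, n)) ord0 j = 0.
  by rewrite big1 // => j _; rewrite mxE.
rewrite /= z0 => e; apply: (etrans _ e); under [RHS]eq_bigr do rewrite summxE; rewrite exchange_big /=; apply: eq_bigr => D _.
rewrite (eq_bigr (fun j => a D * ((D ord0 == j)%:R))); last first.
  by move=> j _; rewrite !mxE.
rewrite -mulr_sumr (bigD1 (D ord0)) //= eqxx big1 ?addr0 ?mulr1 //.
by move=> j /negbTE; rewrite eq_sym => ->.
Qed.

Lemma pos_neq0 (a : FT) D : (pos_part a D != 0) = (0 < a D).
Proof.
rewrite /pos_part ffunE /Order.max; case: (ltrP (a D) 0) => h.
  by rewrite eqxx; apply/esym/negbTE; rewrite -leNgt ltW.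
by rewrite lt_def h andbT.
Qed.

Lemma neg_neq0 (a : FT) D : (neg_part a D != 0) = (a D < 0).
Proof.
rewrite /neg_part ffunE /Order.min; case: (ltrP (a D) 0) => h.
  by rewrite lt_eqF.
by rewrite eqxx.
Qed.

Lemma perturb (W : 'M[R]_(m, n)) (lam b : FT) :
  in_Lambda W lam -> \sum_D b D *: detmx R D = 0 -> \sum_D b D = 0 ->
  (forall D, 0 < b D -> 0 < lam D) ->
  exists eps : R, 0 < eps /\ exists mu, in_Lambda W mu /\
    C11 mu = C11 lam - eps * \sum_D b D * log2 (\rank (detmx R D))%:R.
Proof.
move=> [[h0 h1] hW] hb hb0 hpos.
pose c := \sum_(D | 0 < b D) (b D / lam D).
have c0 : 0 <= c.
  apply: sumr_ge0 => D hD; apply: divr_ge0; first exact: ltW.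
  exact: h0.
pose eps := (1 + c)^-1.
have e0 : 0 < eps by rewrite invr_gt0; apply: ltr_pwDl.
exists eps; split => //.
pose mu : FT := [ffun D => lam D - eps * b D].
exists mu; split; last first.
  rewrite /C11 /mu.
  rewrite (eq_bigr (fun D => lam D * log2 (\rank (detmx R D))%:R -
     eps * (b D * log2 (\rank (detmx R D))%:R))); last first.
    by move=> D _; rewrite ffunE; ring.
  by rewrite sumrB mulr_sumr.
split; last first.
  rewrite hW [RHS](eq_bigr (fun D => lam D *: detmx R D - eps *: (b D *: detmx R D))).
    by rewrite sumrB -scaler_sumr hb scaler0 subr0.
  by move=> D _; rewrite ffunE scalerBl scalerA.
split; last first.
  rewrite (eq_bigr (fun D => lam D - eps * b D)); last by move=> D _; rewrite ffunE.
  by rewrite sumrB -mulr_sumr hb0 mulr0 subr0.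
move=> D; rewrite ffunE subr_ge0.
case: (ltrP 0 (b D)) => hbD; last first.
  apply: (@le_trans _ _ 0); last exact: h0.
  by rewrite -(mulr0 eps) ler_wpM2l // ltW.
have hl := hpos D hbD.
have hc : b D / lam D <= c.
  rewrite /c (bigD1 D) //= lerDl; apply: sumr_ge0 => i /andP [hi _].
  apply: divr_ge0; first exact: ltW. exact: h0.
rewrite /eps mulrC -/(b D / (1 + c)) ler_pdivrMr; last by apply: ltr_pwDl.
have -> : b D = (b D / lam D) * lam D by rewrite divfK // gt_eqF.
move: hc; set t := b D / lam D => hc.
have : 0 <= lam D * (1 + c - t) by apply: mulr_ge0; lra.
lra.
Qed.

End Aux.
Arguments perturb {R m n W lam b}.
Arguments sum_alpha0 {R m n a}.
Arguments pos_neq0 {R m n}.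
Arguments neg_neq0 {R m n}.
Arguments C11_ge0 {R m n lam}.
Arguments C11_leB {R m n lam}.

Theorem proposition2 (R : realType) (m n : nat) (W : 'M[R]_(m, n))
  (lam : {ffun {ffun 'I_m -> 'I_n} -> R}) :
  is_channel W -> in_Lambda W lam ->
  (C11 lam = C11_lower W <->
     ~ (exists U : {set {ffun 'I_m -> 'I_n}}, @U_plus R m n U /\ U \subset supp lam)) /\
  (C11 lam = C11_upper W <->
     ~ (exists U : {set {ffun 'I_m -> 'I_n}}, @U_minus R m n U /\ U \subset supp lam)).
Proof.
move=> _ hL.
have ne : (C11_values W !=set0)%classic by exists (C11 lam); exists lam.
have lb : lbound (C11_values W) 0.
  by move=> x [mu [[hd _] ->]]; exact: C11_ge0.
have ub : ubound (C11_values W) (\sum_(D : {ffun 'I_m -> 'I_n}) log2 (\rank (detmx R D))%:R).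
  by move=> x [mu [[hd _] ->]]; exact: C11_leB.
have hinf : forall mu, in_Lambda W mu -> C11_lower W <= C11 mu.
  move=> mu hmu; apply: (ge_inf (E := C11_values W)); first by exists 0.
  by exists mu.
have hsup : forall mu, in_Lambda W mu -> C11 mu <= C11_upper W.
  move=> mu hmu; apply: (ub_le_sup (E := C11_values W)); first by exists (\sum_(D : {ffun 'I_m -> 'I_n}) log2 (\rank (detmx R D))%:R).
  by exists mu.
have hsupp : forall D, (D \in supp lam) = (0 < lam D).
  move=> D; rewrite inE lt_def; case: hL => [[h0 _] _]; by rewrite h0 andbT.
split; split.
- move=> heq [U [[a [[ha1 ha2] ->]] hsub]].
  have hp : forall D, 0 < a D -> 0 < lam D.
    by move=> D hD; rewrite -hsupp; move/fintype.subsetP: hsub; apply; rewrite inE pos_neq0.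
  have [eps [e0 [mu [hmu hC]]]] := perturb hL ha1 (sum_alpha0 (conj ha1 ha2)) hp.
  have := hinf mu hmu; rewrite -heq hC; apply/negP; rewrite -ltNge.
  by rewrite ltrBlDr ltrDl mulr_gt0.
- move=> hno; apply/eqP; rewrite eq_le hinf // andbT.
  apply: lb_le_inf => //.
  move=> x [mu [hmu ->]]; rewrite leNgt; apply/negP => hlt.
  apply: hno; exists (supp (pos_part [ffun D => lam D - mu D])); split.
    exists [ffun D => lam D - mu D]; split => //; split.
      rewrite (eq_bigr (fun D => lam D *: detmx R D - mu D *: detmx R D)).
        by rewrite sumrB -hL.2 -hmu.2 subrr.
      by move=> D _; rewrite ffunE scalerBl.
    rewrite (eq_bigr (fun D => lam D * log2 (\rank (detmx R D))%:R -
        mu D * log2 (\rank (detmx R D))%:R)).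
      by rewrite sumrB subr_gt0.
    by move=> D _; rewrite ffunE mulrBl.
  apply/fintype.subsetP => D; rewrite inE pos_neq0 ffunE hsupp subr_gt0.
  by apply: le_lt_trans; case: hmu => [[h0 _] _]; exact: h0.
- move=> heq [U [[a [[ha1 ha2] ->]] hsub]].
  pose b := [ffun D => - a D].
  have hb : \sum_D b D *: detmx R D = 0.
    under eq_bigr do rewrite ffunE scaleNr.
    by rewrite sumrN ha1 oppr0.
  have hb0 : \sum_D b D = 0.
    under eq_bigr do rewrite ffunE.
    by rewrite sumrN (sum_alpha0 (conj ha1 ha2)) oppr0.
  have hp : forall D, 0 < b D -> 0 < lam D.
    move=> D; rewrite ffunE oppr_gt0 => hD.
    by rewrite -hsupp; move/fintype.subsetP: hsub; apply; rewrite inE neg_neq0.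
  have [eps [e0 [mu [hmu hC]]]] := perturb hL hb hb0 hp.
  have := hsup mu hmu; rewrite -heq hC; apply/negP; rewrite -ltNge.
  under eq_bigr do rewrite ffunE mulNr.
  by rewrite sumrN mulrN opprK ltrDl mulr_gt0.
- move=> hno; apply/eqP; rewrite eq_le hsup //=.
  apply: ge_sup => //.
  move=> x [mu [hmu ->]]; rewrite leNgt; apply/negP => hlt.
  apply: hno; exists (supp (neg_part [ffun D => mu D - lam D])); split.
    exists [ffun D => mu D - lam D]; split => //; split.
      rewrite (eq_bigr (fun D => mu D *: detmx R D - lam D *: detmx R D)).
        by rewrite sumrB -hL.2 -hmu.2 subrr.
      by move=> D _; rewrite ffunE scalerBl.
    rewrite (eq_bigr (fun D => mu D * log2 (\rank (detmx R D))%:R -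
        lam D * log2 (\rank (detmx R D))%:R)).
      by rewrite sumrB subr_gt0.
    by move=> D _; rewrite ffunE mulrBl.
  apply/fintype.subsetP => D; rewrite inE neg_neq0 ffunE hsupp subr_lt0.
  by apply: le_lt_trans; case: hmu => [[h0 _] _]; exact: h0.
Qed.
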